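(* Let $\mathcal{G}$ be an undirected weighted graph (nonzero real weights, possibly negative) with $c$ connected components, let $\mathcal{F}$ be a spanning forest with cycle subgraph $\mathcal{C}$, and suppose $L(\mathcal{G})$ has $n_+$ positive, $n_-$ negative and $n_0$ zero eigenvalues (counted with multiplicity). Then the essential edge Laplacian $L_{ess}(\mathcal{F})=L_e(\mathcal{F})R_{(\mathcal{F},\mathcal{C})}WR_{(\mathcal{F},\mathcal{C})}^T$ has only real eigenvalues, of which $n_+$ are positive, $n_-$ are negative and $n_0-c$ are zero (counted with multiplicity).
   Context: A weighted graph $\mathcal{G}=(\mathcal{V},\mathcal{E},\mathcal{W})$ has weight function $\mathcal{W}:\mathcal{E}\to\mathbb{R}\setminus\{0\}$; $W$ is the diagonal matrix of edge weights. With an arbitrary orientation of edges, the incidence matrix $E\in\mathbb{R}^{|\mathcal{V}|\times|\mathcal{E}|}$ has in the column of edge $(i,j)$ entry $+1$ in row $i$, $-1$ in row $j$, $0$ elsewhere; $L(\mathcal{G})=EWE^T$. A spanning forest $\mathcal{F}$ is an acyclic subgraph with $|\mathcal{V}|-c$ edges containing a spanning tree of each component; the cycle subgraph $\mathcal{C}$ consists of the remaining edges. Edges are ordered so $E=[E_{\mathcal{F}}\ E_{\mathcal{C}}]$ and $W$ correspondingly. $L_e(\mathcal{F})=E_{\mathcal{F}}^TE_{\mathcal{F}}$ (invertible), and $R_{(\mathcal{F},\mathcal{C})}=[\,I\ \ L_e(\mathcal{F})^{-1}E_{\mathcal{F}}^TE_{\mathcal{C}}\,]$. *)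

(* Defs.v *)
From HB Require Import structures.
From mathcomp Require Import all_boot all_order all_algebra.
Set Implicit Arguments. Unset Strict Implicit. Unset Printing Implicit Defensive.
Import Order.TTheory GRing.Theory Num.Theory.
Local Open Scope ring_scope.

(* A graph on vertices 'I_n with m edges; edge e joins [src e] and [dst e];
   the orientation (src e -> dst e) is the arbitrary orientation. *)

Definition simple_graph (n m : nat) (src dst : 'I_m -> 'I_n) : Prop :=
  (forall e, src e != dst e) /\
  (forall e e', ((src e == src e') && (dst e == dst e'))
                || ((src e == dst e') && (dst e == src e')) -> e = e').

Definition sub_adj (n m : nat) (src dst : 'I_m -> 'I_n) (P : pred 'I_m)
  : rel 'I_n :=
  fun x y => [exists e : 'I_m, P e &&
     (((src e == x) && (dst e == y)) || ((src e == y) && (dst e == x)))].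

Definition n_components (n m : nat) (src dst : 'I_m -> 'I_n) : nat :=
  n_comp (connect (sub_adj src dst predT)) predT.

Definition incidence (R : pzRingType) (n m : nat) (src dst : 'I_m -> 'I_n)
  : 'M[R]_(n, m) :=
  \matrix_(i < n, e < m)
    ((if i == src e then 1 else 0) - (if i == dst e then 1 else 0)).

Definition weightmx (R : pzRingType) (m : nat) (w : 'I_m -> R) : 'M[R]_m :=
  diag_mx (\row_e w e).

Definition laplacian (R : pzRingType) (n m : nat) (src dst : 'I_m -> 'I_n)
  (w : 'I_m -> R) : 'M[R]_n :=
  incidence R src dst *m weightmx w *m (incidence R src dst)^T.

(* Edges are ordered as [forest edges (k of them); cycle edges (l of them)]. *)
Definition forest_edge (k l : nat) : pred 'I_(k + l) := fun e => (e < k)%N.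

(* The first k edges form a spanning forest: acyclic (removing any forest
   edge disconnects its endpoints within the forest), and they connect
   exactly the same vertex pairs as the whole graph (i.e. contain a
   spanning tree of each component); and k = |V| - c. *)
Definition spanning_forest (n k l : nat) (src dst : 'I_(k + l) -> 'I_n)
  : Prop :=
  [/\ (k = n - n_components src dst)%N,
      (forall e : 'I_(k + l), @forest_edge k l e ->
         ~~ connect (sub_adj src dst
                       (fun e' => @forest_edge k l e' && (e' != e)))
                    (src e) (dst e)) &
      (forall x y, connect (sub_adj src dst (@forest_edge k l)) x y =
                   connect (sub_adj src dst predT) x y)].

Definition edge_lap_forest (R : comUnitRingType) (n k l : nat)
  (src dst : 'I_(k + l) -> 'I_n) : 'M[R]_k :=
  (lsubmx (incidence R src dst))^T *m lsubmx (incidence R src dst).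

Definition Rmat (R : comUnitRingType) (n k l : nat)
  (src dst : 'I_(k + l) -> 'I_n) : 'M[R]_(k, k + l) :=
  row_mx 1%:M (invmx (edge_lap_forest R src dst)
               *m (lsubmx (incidence R src dst))^T
               *m rsubmx (incidence R src dst)).

Definition ess_edge_lap (R : comUnitRingType) (n k l : nat)
  (src dst : 'I_(k + l) -> 'I_n) (w : 'I_(k + l) -> R) : 'M[R]_k :=
  edge_lap_forest R src dst *m Rmat R src dst *m weightmx w
    *m (Rmat R src dst)^T.

(* s lists the eigenvalues of A with algebraic multiplicity, all real
   (i.e. the characteristic polynomial splits over R with roots s). *)
Definition real_spectrum (R : comNzRingType) (d : nat) (A : 'M[R]_d)
  (s : seq R) : Prop :=
  char_poly A = \prod_(x <- s) ('X - x%:P).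

(* Main.v *)
Require Import Defs.
From HB Require Import structures.
From mathcomp Require Import all_boot all_order all_algebra.
Import Order.TTheory GRing.Theory Num.Theory.
Local Open Scope ring_scope.

Lemma char_poly_mulC (R : comNzRingType) n k (A : 'M[R]_(n,k)) (B : 'M[R]_(k,n)) :
  'X^k * char_poly (A *m B) = 'X^n * char_poly (B *m A).
Proof.
set A' := map_mx polyC A; set B' := map_mx polyC B.
pose Z := block_mx ('X%:M : 'M_n) A' B' (1%:M : 'M_k).
have h1 : block_mx 1%:M (- A') 0 1%:M *m Z = block_mx (char_poly_mx (A *m B)) 0 B' 1%:M.
  rewrite mulmx_block /char_poly_mx map_mxM -/A' -/B'.
  by rewrite !mul1mx !mulmx1 !mul0mx !add0r mulNmx addrN.
have h2 : block_mx 1%:M 0 (- B') ('X%:M) *m Z = block_mx ('X%:M) A' 0 (char_poly_mx (B *m A)).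
  rewrite mulmx_block /char_poly_mx map_mxM -/A' -/B'.
  rewrite !mul1mx !mulmx1 !mul0mx !addr0 mulNmx mul_mx_scalar mul_scalar_mx addNr.
  by congr block_mx; rewrite addrC mulNmx.
have := congr1 determinant h1; rewrite det_mulmx det_ublock det_lblock !det1 !mul1r mulr1 => d1.
have := congr1 determinant h2; rewrite det_mulmx det_ublock det_lblock det1 mul1r !det_scalar => d2.
by rewrite /char_poly -d1 -d2 mulrC.
Qed.
Lemma spec_div (R : realDomainType) (c : nat) (p : {poly R}) (s : seq R) :
  'X^c * p = \prod_(x <- s) ('X - x%:P) ->
  exists s' : seq R,
    [/\ p = \prod_(x <- s') ('X - x%:P),
        count (fun x => 0 < x) s' = count (fun x => 0 < x) s,
        count (fun x => x < 0) s' = count (fun x => x < 0) s &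
        count (fun x => x == 0) s' = (count (fun x : R => x == 0%R) s - c)%N].
Proof.
move=> hp.
set z := count (fun x : R => x == 0) s.
set P := \prod_(x <- s | x != 0) ('X - x%:P).
have hs : \prod_(x <- s) ('X - x%:P) = P * 'X^z.
  rewrite (bigID (fun x => x != 0)) /=; congr (_ * _).
  rewrite (eq_bigr (fun _ => 'X)); last by move=> x /negPn/eqP ->; rewrite subr0.
  rewrite big_const_seq iter_mulr_1; congr (_ ^+ _); apply: eq_count => x /=.
  by rewrite negbK.
have P0 : P.[0] != 0.
  rewrite /P horner_prod prodf_seq_neq0; apply/allP => x _; apply/implyP => hx.
  by rewrite !hornerE oppr_eq0.
have Xn0 : forall m, ('X^m : {poly R}) != 0 by move=> m; rewrite monic_neq0 ?monicXn.
have zc : (c <= z)%N.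
  rewrite leqNgt; apply/negP => zc.
  have : 'X^z * ('X^(c - z) * p) = 'X^z * P.
    by rewrite mulrA -exprD subnKC ?(ltnW zc) // hp hs mulrC.
  move/(mulfI (Xn0 z)) => /(congr1 (horner^~ 0)).
  rewrite hornerM hornerXn expr0n subn_eq0 leqNgt zc mul0r => h.
  by move: P0; rewrite -h eqxx.
exists ([seq x <- s | x != 0] ++ nseq (z - c) 0); split.
- apply: (mulfI (Xn0 c)); rewrite hp hs big_cat /= big_filter big_nseq subr0 iter_mulr_1.
  by rewrite mulrCA -exprD subnKC.
- rewrite count_cat count_filter count_nseq ltxx mul0n addn0; apply: eq_count => x /=.
  by case: (ltrgt0P x).
- rewrite count_cat count_filter count_nseq ltxx mul0n addn0; apply: eq_count => x /=.
  by case: (ltrgt0P x).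
- rewrite count_cat count_filter count_nseq eqxx mul1n.
  rewrite (eq_count (a2 := pred0)) ?count_pred0 // => x /=.
  by case: eqP.
Qed.
Lemma incT_mulE (R : comNzRingType) n m (src dst : 'I_m -> 'I_n) p
  (Y : 'M[R]_(n, p)) e j :
  ((incidence R src dst)^T *m Y) e j = Y (src e) j - Y (dst e) j.
Proof.
rewrite mxE; under eq_bigr => i _ do rewrite !mxE mulrBl.
rewrite sumrB (bigD1 (src e)) //= eqxx mul1r big1 ?addr0; last first.
  by move=> i /negPf ->; rewrite mul0r.
rewrite (bigD1 (dst e)) //= eqxx mul1r big1 ?addr0 //.
by move=> i /negPf ->; rewrite mul0r.
Qed.

Lemma incFT_mulE (R : comNzRingType) n k l (src dst : 'I_(k + l) -> 'I_n) p
  (Y : 'M[R]_(n, p)) f j :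
  ((lsubmx (incidence R src dst))^T *m Y) f j
  = Y (src (lshift l f)) j - Y (dst (lshift l f)) j.
Proof.
rewrite -incT_mulE !mxE; apply: eq_bigr => i _; by rewrite !mxE.
Qed.

Lemma forest_span (R : comNzRingType) n k l (src dst : 'I_(k + l) -> 'I_n) p
  (hF : spanning_forest src dst) (Y : 'M[R]_(n, p)) :
  (lsubmx (incidence R src dst))^T *m Y = 0 ->
  (incidence R src dst)^T *m Y = 0.
Proof.
case: hF => _ _ hc hY; apply/matrixP => e j; rewrite incT_mulE mxE.
have hadj x y : sub_adj src dst (@forest_edge k l) x y -> Y x j = Y y j.
  case/existsP => f /andP[hf hxy].
  have := congr1 (fun M : 'M[R]_(k, p) => M (Ordinal hf) j) hY; rewrite incFT_mulE mxE.
  have -> : lshift l (Ordinal hf) = f by apply: val_inj.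
  move/eqP; rewrite subr_eq0 => /eqP.
  by case/orP: hxy => /andP[/eqP -> /eqP ->].
pose a := [pred v | Y v j == Y (src e) j].
have cl : closed (sub_adj src dst (@forest_edge k l)) a.
  by move=> x y /hadj hxy; rewrite !inE hxy.
have hcon : connect (sub_adj src dst (@forest_edge k l)) (src e) (dst e).
  rewrite hc; apply: connect1; apply/existsP; exists e; by rewrite !eqxx.
have := closed_connect cl hcon; rewrite !inE eqxx => /esym/eqP ->.
by rewrite subrr.
Qed.

Lemma forest_free (R : realFieldType) n k l (src dst : 'I_(k + l) -> 'I_n)
  (hF : spanning_forest src dst) :
  edge_lap_forest R src dst \in unitmx.
Proof.
case: hF => _ hac _.
set EF := lsubmx (incidence R src dst).
rewrite -row_free_unit; apply: inj_row_free => v hv.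
have hu : v *m EF^T = 0.
  have : v *m edge_lap_forest R src dst *m v^T = 0 by rewrite hv mul0mx.
  rewrite /edge_lap_forest -/EF mulmxA -mulmxA.
  have -> : EF *m v^T = (v *m EF^T)^T by rewrite trmx_mul trmxK.
  set u := v *m EF^T => h0.
  have := congr1 (fun M : 'M[R]_1 => M 0 0) h0; rewrite /= !mxE => h.
  have h' : forall i, u 0 i * u 0 i = 0.
    have h2 : \sum_i u 0 i * u 0 i = 0.
      by apply: etrans h; apply: eq_bigr => i _; rewrite [u^T _ _]mxE.
    move=> i; have := psumr_eq0P _ h2.
    apply; last by [].
    by move=> j _; rewrite -expr2 sqr_ge0.
  apply/rowP => j; rewrite [RHS]mxE.
  by move/eqP: (h' j); rewrite mulf_eq0 orbb => /eqP.
apply/rowP => e0; rewrite [RHS]mxE.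
pose ee := lshift l e0.
pose Sadj := sub_adj src dst (fun e' => @forest_edge k l e' && (e' != ee)).
pose Y : 'M[R]_(n, 1) := \col_i (if connect Sadj (src ee) i then 1 else 0).
have hY : EF^T *m Y = delta_mx e0 0.
  apply/matrixP => f j; rewrite incFT_mulE !mxE (ord1 j) eqxx andbT.
  have [->|ne] := eqVneq f e0.
    rewrite -/ee connect0.
    have -> : connect Sadj (src ee) (dst ee) = false.
      by apply/negbTE/hac; rewrite /forest_edge /= ltn_ord.
    by rewrite subr0.

  have ne' : lshift l f != ee by apply: contra ne => /eqP/lshift_inj ->.
  have fe : @forest_edge k l (lshift l f) by rewrite /forest_edge /= ltn_ord.
  have a1 : Sadj (src (lshift l f)) (dst (lshift l f)).
    by apply/existsP; exists (lshift l f); rewrite fe ne' !eqxx.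
  have a2 : Sadj (dst (lshift l f)) (src (lshift l f)).
    by apply/existsP; exists (lshift l f); rewrite fe ne' !eqxx orbT.
  have -> : connect Sadj (src ee) (src (lshift l f)) = connect Sadj (src ee) (dst (lshift l f)).
    apply/idP/idP => h; apply: connect_trans h (connect1 _) => //.
  by rewrite subrr.
have := congr1 (fun M : 'M[R]_(1, 1) => M 0 0) (congr1 (mulmx^~ Y) hu).
rewrite /= -mulmxA hY mul0mx -colE !mxE => ->.
by [].
Qed.

Theorem theorem1 (R : rcfType) (n k l : nat)
  (src dst : 'I_(k + l) -> 'I_n) (w : 'I_(k + l) -> R)
  (hsimple : simple_graph src dst)
  (hw : forall e, w e != 0)
  (hF : spanning_forest src dst)
  (s : seq R) (hL : real_spectrum (laplacian src dst w) s) :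
  exists s' : seq R,
    [/\ real_spectrum (ess_edge_lap src dst w) s',
        count (fun x => 0 < x) s' = count (fun x => 0 < x) s,
        count (fun x => x < 0) s' = count (fun x => x < 0) s &
        count (fun x => x == 0) s' =
          (count (fun x : R => x == 0%R) s - n_components src dst)%N].
Proof.
apply: spec_div; rewrite -hL.
have hLe := @forest_free R _ _ _ _ _ hF.
set E := incidence R src dst.
set EF := lsubmx E.
have [D hD] : exists D, E = EF *m D.
  have : (E^T <= EF^T)%MS.
    by rewrite submxE; apply/eqP; apply: forest_span => //; apply: mulmx_coker.
  case/submxP => D hD; exists D^T.
  by rewrite -[E]trmxK hD trmx_mul trmxK.
have hE : EF *m Rmat R src dst = E.
  rewrite /Rmat mul_mx_row mulmx1 -/E -/EF.
  rewrite -[RHS]hsubmxK -/EF; congr row_mx.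
  rewrite -[D]hsubmxK mul_mx_row in hD.
  rewrite [in RHS]hD row_mxKr [in LHS]hD row_mxKr.
  rewrite -!mulmxA (mulmxA EF^T) -/(edge_lap_forest R src dst).
  by rewrite (mulmxA (invmx _)) mulVmx // mul1mx.
set M := Rmat R src dst *m weightmx w *m (Rmat R src dst)^T.
have hLap : laplacian src dst w = EF *m (M *m EF^T).
  by rewrite /laplacian -/E -hE trmx_mul /M !mulmxA.
have hEss : ess_edge_lap src dst w = edge_lap_forest R src dst *m M.
  by rewrite /ess_edge_lap /M !mulmxA.
have hcn : (n_components src dst <= n)%N.
  by rewrite /n_components; apply: leq_trans (max_card _) _; rewrite card_ord.
case: (hF) => hk _ _.
set c := n_components src dst in hcn hk *.
have hn : n = (k + c)%N by rewrite hk subnK.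
have h1 : 'X^k * char_poly (EF *m (M *m EF^T))
    = 'X^n * char_poly (M *m edge_lap_forest R src dst).
  by rewrite char_poly_mulC -mulmxA.
have h2 : 'X^k * char_poly (edge_lap_forest R src dst *m M)
    = 'X^k * char_poly (M *m edge_lap_forest R src dst) by apply: char_poly_mulC.
have hX : 'X^n = 'X^k * 'X^c :> {poly R} by rewrite hn exprD.
apply: (mulfI (monic_neq0 (monicXn R k))).
by rewrite hLap hEss h1 hX -mulrA [LHS]mulrCA h2 mulrCA.
Qed.
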